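(* Let $G$ be a graph and $u$ a vertex of $G$ satisfying the NC property in $G$. Let $G'$ be the graph obtained from $G$ by locally chordalizing all holes in $\mathcal H(G,u)$ by $u$. Then every hole of $G'$ is a hole of $G$ (no new hole is created).
   Context: All graphs are finite and simple. A hole of $G$ is an induced cycle of length at least $4$. $\mathcal H(G)$ is the set of holes of $G$ and $\mathcal H(G,u)$ the set of holes containing $u$. A vertex $u$ satisfies the NC property in $G$ if there are no holes $H\in\mathcal H(G,u)$ and $H'\in\mathcal H(G)\setminus\mathcal H(G,u)$ sharing two consecutive edges, i.e. two distinct edges with a common end vertex that both lie on $H$ and on $H'$. Locally chordalizing all holes in $\mathcal H(G,u)$ by $u$ produces the graph $G'$ with $V(G')=V(G)$ and $E(G')=E(G)\cup\{uw: w\neq u,\ w\in V(H)\text{ for some }H\in\mathcal H(G,u)\}$. *)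

(* Defs.v *)
From mathcomp Require Import all_boot.
Set Implicit Arguments. Unset Strict Implicit. Unset Printing Implicit Defensive.

(* A hole is an induced cycle of length >= 4, given by the cyclic sequence s
   of its (distinct) vertices: two vertices of s are adjacent in the graph
   iff they are consecutive on the cycle. *)
Definition hole (T : eqType) (E : T -> T -> Prop) (s : seq T) : Prop :=
  [/\ uniq s, 4 <= size s &
      forall x y, x \in s -> y \in s -> (E x y <-> (y = next s x \/ x = next s y))].

(* xy is an edge of the hole s (holes are induced subgraphs). *)
Definition hole_edge (T : eqType) (E : T -> T -> Prop) (s : seq T) (x y : T) :=
  [/\ x \in s, y \in s & E x y].

Definition NC (T : eqType) (E : T -> T -> Prop) (u : T) : Prop :=
  ~ exists (H H' : seq T) (x y z : T),
      [/\ hole E H, u \in H, hole E H', u \notin H' &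
        [/\ x <> z, hole_edge E H x y, hole_edge E H y z,
            hole_edge E H' x y & hole_edge E H' y z]].

(* Locally chordalizing all holes of H(G,u) by u: add edges uw for every
   w <> u lying on some hole containing u. *)
Definition locchord (T : eqType) (E : T -> T -> Prop) (u : T) (x y : T) : Prop :=
  E x y \/
  (x <> y /\
   ((x = u /\ exists H, [/\ hole E H, u \in H & y \in H]) \/
    (y = u /\ exists H, [/\ hole E H, u \in H & x \in H]))).

(* Main.v *)
From Stdlib Require Import Classical.
Require Import Defs.
From mathcomp Require Import all_boot zify.
Set Implicit Arguments. Unset Strict Implicit. Unset Printing Implicit Defensive.

Lemma next_cons (T : eqType) (u : T) s k :
  uniq (u :: s) -> k < size s -> next (u :: s) (nth u s k) = nth u s k.+1.
Proof.
move=> U Hk; rewrite next_nth inE mem_nth ?orbT //=.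
case/andP: U => Hu Us.
have -> : (u == nth u s k) = false.
  by apply/negbTE; apply: contra Hu => /eqP ->; rewrite mem_nth.
by rewrite index_uniq.
Qed.

Lemma next_cons0 (T : eqType) (u : T) s : next (u :: s) u = nth u s 0.
Proof. by rewrite next_nth inE eqxx /= eqxx. Qed.

Definition ipathf (T : Type) (E : T -> T -> Prop) (m : nat) (g : nat -> T) :=
  forall k l, k < m -> l < m ->
    (g k = g l -> k = l) /\ (E (g k) (g l) <-> (l = k.+1 \/ k = l.+1)).

Definition HR (T : Type) (E : T -> T -> Prop) (u : T) (m : nat) (h : nat -> T) :=
  [/\ ipathf E m h, 3 <= m, (forall k, k < m -> h k <> u)
    & (forall k, k < m -> (E u (h k) <-> (k = 0 \/ k = m.-1)))].

Lemma mem_mkseqP (T : eqType) (h : nat -> T) m x :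
  reflect (exists2 k, k < m & x = h k) (x \in mkseq h m).
Proof.
apply: (iffP mapP) => [[k] | [k]]; rewrite ?mem_iota => Hk ->; exists k => //.
by rewrite mem_iota.
Qed.

Lemma hole_of_HR (T : eqType) (E : T -> T -> Prop) u m h :
  (forall x y, E x y -> E y x) -> (forall x, ~ E x x) ->
  HR E u m h -> hole E (u :: mkseq h m).
Proof.
move=> Es Ei [P Hm Hu Hadj].
have Hnth : forall k, k < m -> nth u (mkseq h m) k = h k.
  by move=> k Hk; rewrite nth_mkseq.
have Hnth2 : forall k, m <= k -> nth u (mkseq h m) k = u.
  by move=> k Hk; rewrite nth_default // size_mkseq.
have U : uniq (u :: mkseq h m).
  rewrite /= andbC; apply/andP; split.
    rewrite map_inj_in_uniq ?iota_uniq // => k l; rewrite !mem_iota !add0n.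
    by move=> Hk Hl Heq; apply/eqP; have [] := P k l Hk Hl; move=> /(_ Heq) ->.
  by apply/negP => /mem_mkseqP [k Hk] /esym; apply: Hu.
have Hnext : forall k, k < m -> next (u :: mkseq h m) (h k) =
                                 if k.+1 < m then h k.+1 else u.
  move=> k Hk; rewrite -Hnth // next_cons ?size_mkseq //.
  by case: ifP => H; [rewrite Hnth | rewrite Hnth2 // leqNgt H].
split => //; first by rewrite /= size_mkseq; lia.
have Hu0 : h 0 <> u by apply: Hu; lia.
have Hul : h m.-1 <> u by apply: Hu; lia.
move=> x y; rewrite !inE => /orP [/eqP -> | /mem_mkseqP [k Hk ->]]
                            /orP [/eqP -> | /mem_mkseqP [l Hl ->]].
- rewrite next_cons0 Hnth; last lia.
  split => [/Ei [] | ]. by case => /esym.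
- rewrite Hadj // next_cons0 Hnth; last lia. rewrite Hnext //.
  split.
    case => [-> | ->]; [by left | right].
    by case: ifP => //; lia.
  case => [E1 | ]; first by left; have [] := P l 0 Hl ltac:(lia); move=> /(_ E1).
  case: ifP => H; first by move=> /esym /(Hu _ H).
  by right; lia.
- rewrite next_cons0 Hnth; last lia. rewrite Hnext //.
  split.
    move/Es; rewrite Hadj //; case => [-> | ->].
      by right.
    by left; case: ifP => //; lia.
  case => [ | E1]; last first.
    by apply: Es; rewrite Hadj //; left; have [] := P k 0 Hk ltac:(lia); move=> /(_ E1).
  case: ifP => H; first by move=> /esym /(Hu _ H).
  by move=> _; apply: Es; rewrite Hadj //; right; lia.
- rewrite (proj2 (P k l Hk Hl)) !Hnext //.
  split.
    by case => [El | Ek]; [left; rewrite ifT -El | right; rewrite ifT -?Ek].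
  case; case: ifP => H E1.
  + by left; have [] := P l k.+1 Hl H; move=> /(_ E1).
  + by have := Hu l Hl; rewrite E1.
  + by right; have [] := P k l.+1 Hk H; move=> /(_ E1).
  + by have := Hu k Hk; rewrite E1.
Qed.

Lemma nth_eqE (T : eqType) (u : T) s k l :
  uniq (u :: s) -> k < size s -> (nth u s k = nth u s l <-> k = l).
Proof.
case/andP => Hu Us Hk; split => [|-> //].
case: (ltnP l (size s)) => Hl.
  by move/eqP; rewrite nth_uniq // => /eqP.
by rewrite (nth_default _ Hl) => Heq; move: Hu; rewrite -Heq mem_nth.
Qed.

Lemma hole_rot (T : eqType) (R : T -> T -> Prop) i c :
  hole R c -> hole R (rot i c).
Proof.
case=> U S A; split; rewrite ?rot_uniq ?size_rot //.
move=> x y; rewrite !mem_rot => Hx Hy; rewrite !next_rot //; exact: A.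
Qed.

Lemma HR_of_hole (T : eqType) (R : T -> T -> Prop) u c :
  hole R c -> u \in c ->
  exists m h, HR R u m h /\ (forall x, x \in c -> x = u \/ exists2 k, k < m & x = h k).
Proof.
move=> Hc Huc; case: (rot_to Huc) => i s' Hrot.
have := hole_rot i Hc; rewrite Hrot => -[U S A].
have Hu : u \notin s' by case/andP: U.
exists (size s'), (fun k => nth u s' k); split; last first.
  move=> x; rewrite -(mem_rot i) Hrot inE => /orP [/eqP -> | Hx]; first by left.
  by right; exists (index x s'); rewrite ?index_mem ?nth_index.
have Hne : forall k, k < size s' -> nth u s' k <> u.
  by move=> k Hk Heq; move: Hu; rewrite -{1}Heq mem_nth.
have Hin : forall k, k < size s' -> nth u s' k \in u :: s'.
  by move=> k Hk; rewrite inE mem_nth ?orbT.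
have Eq : forall k l, k < size s' -> (nth u s' k = nth u s' l <-> k = l).
  by move=> k l Hk; apply: nth_eqE.
split => //.
- move=> k l Hk Hl; split; first by move/(Eq _ _ Hk).
  rewrite A ?Hin // !next_cons // (Eq _ _ Hl) (Eq _ _ Hk); tauto.
- move=> k Hk; rewrite A ?mem_head ?Hin // next_cons0 next_cons // (Eq _ _ Hk).
  split; case=> H; try by [left]; right.
  + case: (ltnP k.+1 (size s')) => H2; last by lia.
    by have := Hne _ H2; rewrite -H.
  + rewrite nth_default //; lia.
Qed.

Inductive conn (T : Type) (E : T -> T -> Prop) (P : T -> Prop) : T -> T -> Prop :=
| cR x : P x -> conn E P x x
| cS x y z : P x -> E x y -> conn E P y z -> conn E P x z.

Lemma conn_P (T : Type) (E : T -> T -> Prop) P x y : conn E P x y -> P x /\ P y.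
Proof. by elim=> [z Pz | a b c Pa _ _ [_ Pc]]. Qed.

Lemma conn_trans (T : Type) (E : T -> T -> Prop) P x y z :
  conn E P x y -> conn E P y z -> conn E P x z.
Proof. by elim=> // a b c Pa Eab _ IH /IH; apply: cS. Qed.

Lemma conn_sym (T : Type) (E : T -> T -> Prop) P x y :
  (forall x y, E x y -> E y x) -> conn E P x y -> conn E P y x.
Proof.
move=> Es; elim=> [a Pa | a b c Pa Eab Cbc IH]; first exact: cR.
apply: conn_trans IH _; apply: (@cS _ _ _ b a a); first by case: (conn_P Cbc).
  exact: Es.
exact: cR.
Qed.

Lemma conn_mono (T : Type) (E : T -> T -> Prop) (P Q : T -> Prop) x y :
  (forall z, P z -> Q z) -> conn E P x y -> conn E Q x y.
Proof.
move=> PQ; elim=> [a Pa | a b c Pa Eab _ IH]; first by apply: cR; apply: PQ.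
by apply: cS IH => //; apply: PQ.
Qed.

Lemma conn_chain (T : Type) (E : T -> T -> Prop) P (f : nat -> T) n lo :
  (forall k, k < n -> E (f (lo + k)) (f (lo + k).+1)) ->
  (forall k, k <= n -> P (f (lo + k))) -> conn E P (f lo) (f (lo + n)).
Proof.
elim: n lo => [|n IH] lo HE HP; first by rewrite addn0; apply: cR; have := HP 0; rewrite addn0; apply.
apply: (@cS _ _ _ _ (f lo.+1)).
- by have := HP 0; rewrite addn0; apply.
- by have := HE 0; rewrite addn0; apply.
have -> : lo + n.+1 = lo.+1 + n by lia.
apply: IH => k Hk.
  by have := HE k.+1; rewrite addSnnS; apply.
by have := HP k.+1; rewrite addSnnS; apply.
Qed.

Definition walkf (T : Type) (E : T -> T -> Prop) (n : nat) (f : nat -> T) :=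
  forall k, k.+1 < n -> E (f k) (f k.+1).

Lemma walk_of_conn (T : Type) (E : T -> T -> Prop) P x y :
  conn E P x y -> exists n f, [/\ 0 < n, walkf E n f, f 0 = x, f n.-1 = y
                                & forall k, k < n -> P (f k)].
Proof.
elim=> [a Pa | a b c Pa Eab _ [n [f [Hn W F0 Fl FP]]]].
  by exists 1, (fun _ => a); split.
exists n.+1, (fun k => if k is k'.+1 then f k' else a); split => //.
- by case=> [|k] Hk /=; [rewrite F0 | apply: W].
- by rewrite /=; case: n Hn W F0 Fl FP.
- by case=> [|k] Hk //=; apply: FP.
Qed.

Lemma shortcut (T : Type) (E : T -> T -> Prop) P n (f : nat -> T) i d :
  walkf E n f -> (forall k, k < n -> P (f k)) -> 0 < d -> i + d < n ->
  ((i + d).+1 < n -> E (f i) (f (i + d).+1)) ->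
  (n.-1 - d <= i -> f (n.-1 - d) = f n.-1) ->
  let g := fun k => if k <= i then f k else f (k + d) in
  [/\ walkf E (n - d) g, forall k, k < n - d -> P (g k), g 0 = f 0 & g (n - d).-1 = f n.-1].
Proof.
move=> W FP Hd Hid He Hl g; split.
- move=> k Hk; rewrite /g; case: ifP => H1; case: ifP => H2.
  + by apply: W; lia.
  + have -> : k = i by lia.
    by rewrite addSn; apply: He; lia.
  + by lia.
  + have -> : k.+1 + d = (k + d).+1 by lia.
    by apply: W; lia.
- move=> k Hk; rewrite /g; case: ifP => _; apply: FP; lia.
- by rewrite /g.
- rewrite /g; case: ifP => H.
    have -> : (n - d).-1 = n.-1 - d by lia.
    by apply: Hl; lia.
  by congr f; lia.
Qed.

Lemma extract_walk (T : Type) (E : T -> T -> Prop) P :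
  (forall x y, E x y -> E y x) -> (forall x, ~ E x x) ->
  forall n f, 0 < n -> walkf E n f -> (forall k, k < n -> P (f k)) ->
  exists m g, [/\ 0 < m, ipathf E m g, g 0 = f 0, g m.-1 = f n.-1
                & forall k, k < m -> P (g k)].
Proof.
move=> Es Ei n; elim: n {-2}n (leqnn n) => [|N IH] n Hn f Hpos W FP; first by lia.
case: (classic (exists i j, [/\ i < j, j < n &
                   f i = f j \/ (E (f i) (f j) /\ i.+1 < j)])).
  move=> [i [j [Hij Hjn [Heq | [HE Hij2]]]]].
  + have H1 : (i + (j - i)).+1 < n -> E (f i) (f (i + (j - i)).+1).
      move=> H; have -> : (i + (j - i)).+1 = j.+1 by lia.
      by rewrite Heq; apply: W; lia.
    have H2 : n.-1 - (j - i) <= i -> f (n.-1 - (j - i)) = f n.-1.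
      move=> H; have -> : n.-1 - (j - i) = i by lia.
      by rewrite Heq; congr f; lia.
    have [W' P' G0 Gl] := @shortcut T E P n f i (j - i) W FP ltac:(lia) ltac:(lia) H1 H2.
    have [m [g [Hm Hg Hg0 Hgl HgP]]] := IH (n - (j - i)) ltac:(lia) _ ltac:(lia) W' P'.
    by exists m, g; split => //; rewrite ?Hg0 ?Hgl.
  + have H1 : (i + (j - i).-1).+1 < n -> E (f i) (f (i + (j - i).-1).+1).
      by move=> H; have -> : (i + (j - i).-1).+1 = j by lia.
    have H2 : n.-1 - (j - i).-1 <= i -> f (n.-1 - (j - i).-1) = f n.-1 by lia.
    have [W' P' G0 Gl] := @shortcut T E P n f i (j - i).-1 W FP ltac:(lia) ltac:(lia) H1 H2.
    have [m [g [Hm Hg Hg0 Hgl HgP]]] := IH (n - (j - i).-1) ltac:(lia) _ ltac:(lia) W' P'.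
    by exists m, g; split => //; rewrite ?Hg0 ?Hgl.
move=> ND; exists n, f; split => // k l Hk Hl; split.
  move=> Heq; case: (ltngtP k l) => // H; exfalso; apply: ND.
    by exists k, l; split => //; left.
  by exists l, k; split => //; left.
split.
  move=> HE; case: (ltngtP k l) => H.
  - case: (ltnP k.+1 l) => H2; last by left; lia.
    by exfalso; apply: ND; exists k, l; split => //; right.
  - case: (ltnP l.+1 k) => H2; last by right; lia.
    by exfalso; apply: ND; exists l, k; split => //; right; split => //; apply: Es.
  - by subst; case: (Ei _ HE).
by case=> H; subst; [apply: W | apply: Es; apply: W].
Qed.

Lemma extract (T : Type) (E : T -> T -> Prop) P x y :
  (forall x y, E x y -> E y x) -> (forall x, ~ E x x) -> conn E P x y ->
  exists m g, [/\ 0 < m, ipathf E m g, g 0 = x, g m.-1 = y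
                & forall k, k < m -> P (g k)].
Proof.
move=> Es Ei C; have [n [f [Hn W F0 Fl FP]]] := walk_of_conn C; subst x y.
exact: extract_walk.
Qed.

Lemma HR_inj (T : Type) (E : T -> T -> Prop) u m h k l :
  HR E u m h -> k < m -> l < m -> h k = h l -> k = l.
Proof. by case=> P _ _ _ Hk Hl; case: (P k l Hk Hl). Qed.

Lemma HR_E (T : Type) (E : T -> T -> Prop) u m h k l :
  HR E u m h -> k < m -> l < m -> (E (h k) (h l) <-> (l = k.+1 \/ k = l.+1)).
Proof. by case=> P _ _ _ Hk Hl; case: (P k l Hk Hl). Qed.

Lemma in_mkseq (T : eqType) (h : nat -> T) m k : k < m -> h k \in mkseq h m.
Proof. by move=> Hk; apply/mem_mkseqP; exists k. Qed.

Lemma sep_conn (T : eqType) (E : T -> T -> Prop) u m h i :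
  (forall x y, E x y -> E y x) -> (forall x, ~ E x x) -> NC E u ->
  HR E u m h -> 0 < i -> i < m.-1 ->
  ~ conn E (fun x => [/\ x <> u, x <> h i & (~ E (h i) x \/ x = h i.-1 \/ x = h i.+1)])
         (h i.-1) (h i.+1).
Proof.
move=> Es Ei Nc HRh Hi0 Him C.
have [P Hm Hu Hadj] := HRh.
have [m' [p [Hm' Pp P0 Pl PP]]] := extract Es Ei C.
have Hhinj := HR_inj HRh; have HhE := HR_E HRh.
have Hpinj : forall k l, k < m' -> l < m' -> p k = p l -> k = l.
  by move=> k l Hk Hl; case: (Pp k l Hk Hl).
have Hm3 : 3 <= m'.
  case: m' Hm' Pp P0 Pl PP Hpinj => [|[|[|m']]] //= _ Pp P0 Pl PP _.
    by move: Pl; rewrite P0 => /Hhinj; lia.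
  have := proj2 (Pp 0 1 isT isT); rewrite P0 Pl HhE; lia.
have HR' : HR E (h i) m' p.
  split => //.
    by move=> k Hk; case: (PP k Hk).
  move=> k Hk; split.
    case: (PP k Hk) => _ _ [] // [] Hq _.
      by left; apply: Hpinj => //; rewrite Hq P0.
    by right; apply: Hpinj => //; [lia | rewrite Hq Pl].
  case=> ->.
    by rewrite P0; apply: Es; apply/HhE; lia.
  by rewrite Pl; apply/HhE; lia.
have H1 := hole_of_HR Es Ei HRh.
have H2 := hole_of_HR Es Ei HR'.
apply: Nc; exists (u :: mkseq h m), (h i :: mkseq p m'), (h i.-1), (h i), (h i.+1).
have hin : forall k, k < m -> h k \in u :: mkseq h m.
  by move=> k Hk; rewrite inE in_mkseq ?orbT.
have Ea : E (h i.-1) (h i) by apply/HhE; lia.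
have Eb : E (h i) (h i.+1) by apply/HhE; lia.
split => //.
- by rewrite mem_head.
- rewrite inE negb_or; apply/andP; split.
    by apply/eqP => Heq; apply: (Hu i); [lia | rewrite Heq].
  by apply/negP => /mem_mkseqP [k Hk Heq]; case: (PP k Hk) => Hne _ _; apply: Hne; rewrite Heq.
- split => //.
  + by move/(Hhinj i.-1 i.+1 ltac:(lia) ltac:(lia)); lia.
  + by split => //; apply: hin; lia.
  + by split => //; apply: hin; lia.
  + split => //; last by rewrite mem_head.
    by rewrite inE -P0 in_mkseq ?orbT.
  + split => //; first by rewrite mem_head.
    by rewrite inE -Pl in_mkseq ?orbT //; lia.
Qed.

Lemma chain_f (T : Type) (E : T -> T -> Prop) P (f : nat -> T) lo hi :
  lo <= hi -> (forall k, lo <= k < hi -> E (f k) (f k.+1)) ->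
  (forall k, lo <= k <= hi -> P (f k)) -> conn E P (f lo) (f hi).
Proof.
move=> Hlh HE HP; have -> : hi = lo + (hi - lo) by lia.
apply: conn_chain => k Hk; [apply: HE | apply: HP]; lia.
Qed.

Lemma chain_h (T : Type) (E : T -> T -> Prop) u m h P lo hi :
  HR E u m h -> lo <= hi -> hi < m ->
  (forall k, lo <= k <= hi -> P (h k)) -> conn E P (h lo) (h hi).
Proof.
move=> HRh Hlh Hhm HP; apply: chain_f => // k Hk.
by apply/(HR_E HRh); [lia | lia | left].
Qed.

Lemma side_avoid (T : eqType) (E : T -> T -> Prop) u m h i (Wp : T -> Prop) x0 :
  (forall x y, E x y -> E y x) -> (forall x, ~ E x x) -> NC E u ->
  HR E u m h -> 0 < i -> i < m.-1 ->
  (forall x, Wp x -> conn E (fun x => [/\ x <> u, x <> h i & ~ E (h i) x]) x0 x) ->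
  (forall x l, Wp x -> l < i -> x <> h l /\ ~ E x (h l)) \/
  (forall x l, Wp x -> i < l < m -> x <> h l /\ ~ E x (h l)).
Proof.
move=> Es Ei Nc HRh Hi0 Him HW.
have [P Hm Hu Hadj] := HRh.
case: (classic (exists x l, [/\ Wp x, l < i & (x = h l \/ E x (h l))]));
  last first.
  by move=> N; left => x l Wx Hl; split => [Heq | HE]; apply: N; exists x, l; split => //;
    [left | right].
move=> [x1 [l1 [W1 L1 T1]]].
case: (classic (exists x l, [/\ Wp x, i < l < m & (x = h l \/ E x (h l))]));
  last first.
  by move=> N; right => x l Wx Hl; split => [Heq | HE]; apply: N; exists x, l; split => //;
    [left | right].
move=> [x2 [l2 [W2 L2 T2]]]; exfalso.
apply: (sep_conn Es Ei Nc HRh Hi0 Him).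
set Ga := (fun x => _).
have Gh : forall k, k < m -> k != i -> Ga (h k).
  move=> k Hk Hki; split.
  - exact: Hu.
  - by move/(HR_inj (l:=i) HRh Hk ltac:(lia)) => Heq; move: Hki; rewrite Heq eqxx.
  - case: (ltngtP k i) => H.
    + case: (k =P i.-1) => [-> | Hne]; [by right; left | left].
      by move/(HR_E (k:=i) HRh ltac:(lia) Hk); lia.
    + case: (k =P i.+1) => [-> | Hne]; [by right; right | left].
      by move/(HR_E (k:=i) HRh ltac:(lia) Hk); lia.
    + by move: Hki; rewrite H eqxx.
have GsGa : forall z, [/\ z <> u, z <> h i & ~ E (h i) z] -> Ga z.
  by move=> z [A B C]; split => //; left.
have C1 : conn E Ga (h i.-1) x1.
  apply: (@conn_trans _ _ _ _ (h l1)).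
    apply: conn_sym => //; apply: (chain_h HRh); try lia.
    by move=> k Hk; apply: Gh; [lia | apply/eqP; lia].
  have G1 : Ga x1 by apply: GsGa; case: (conn_P (HW x1 W1)) => _ HH; exact: HH.
  case: T1 => [-> | HE]; first by apply: cR; apply: Gh; [lia | apply/eqP; lia].
  apply: (@cS _ _ _ _ x1); [apply: Gh; [lia | apply/eqP; lia] | exact: Es | exact: cR G1].
have C2 : conn E Ga x2 (h i.+1).
  apply: (@conn_trans _ _ _ _ (h l2)); last first.
    apply: conn_sym => //; apply: (chain_h HRh); try lia.
    by move=> k Hk; apply: Gh; [lia | apply/eqP; lia].
  have G2 : Ga x2 by apply: GsGa; case: (conn_P (HW x2 W2)) => _ HH; exact: HH.
  case: T2 => [-> | HE]; first by apply: cR; apply: Gh; [lia | apply/eqP; lia].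
  by apply: cS; [exact: G2 | exact: HE | apply: cR; apply: Gh; [lia | apply/eqP; lia]].
apply: conn_trans C1 _; apply: conn_trans _ C2.
apply: (conn_mono GsGa); apply: (@conn_trans _ _ _ _ x0).
  by apply: conn_sym => //; apply: HW.
exact: HW.
Qed.

Lemma HR_rev (T : Type) (E : T -> T -> Prop) u m h :
  HR E u m h -> HR E u m (fun k => h (m.-1 - k)).
Proof.
case=> P Hm Hu Hadj; split => //.
- move=> k l Hk Hl; have [A B] := P (m.-1 - k) (m.-1 - l) ltac:(lia) ltac:(lia).
  split; first by move/A; lia.
  by rewrite B; lia.
- by move=> k Hk; apply: Hu; lia.
- by move=> k Hk; rewrite Hadj; lia.
Qed.

Lemma anchor (T : eqType) (E : T -> T -> Prop) u m h i (Wp : T -> Prop) x0 :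
  (forall x y, E x y -> E y x) -> (forall x, ~ E x x) -> NC E u ->
  HR E u m h -> 0 < i -> i < m.-1 ->
  (forall x, Wp x -> conn E (fun x => [/\ x <> u, x <> h i & ~ E (h i) x]) x0 x) ->
  exists h' i', [/\ HR E u m h', 0 < i', i' < m.-1, h' i' = h i &
     forall x l, Wp x -> l < i' -> x <> h' l /\ ~ E x (h' l)].
Proof.
move=> Es Ei Nc HRh Hi0 Him HW.
have [A|B] := side_avoid Es Ei Nc HRh Hi0 Him HW.
  by exists h, i; split.
exists (fun k => h (m.-1 - k)), (m.-1 - i); split.
- exact: HR_rev.
- lia.
- lia.
- by congr h; lia.
- by move=> x l Wx Hl; apply: B => //; lia.
Qed.

Lemma crossing (P : nat -> Prop) n :
  P 0 -> ~ P n -> exists k, [/\ k < n, P k & ~ P k.+1].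
Proof.
elim: n => [|n IH] H0 Hn; first by [].
case: (classic (P n)) => Hp.
  by exists n; split.
have [k [Hk Pk Nk]] := IH H0 Hp; exists k; split => //; lia.
Qed.

Lemma close (T : eqType) (E : T -> T -> Prop) u (Za Zb Qs : T -> Prop) wa wb :
  (forall x y, E x y -> E y x) -> (forall x, ~ E x x) ->
  Za wa -> Zb wb -> E u wa -> E u wb ->
  (forall x, Za x -> x <> u /\ (E u x -> x = wa)) ->
  (forall x, Zb x -> x <> u /\ (E u x -> x = wb)) ->
  (forall x, Qs x -> x <> u /\ ~ E u x) ->
  (forall x y, Za x -> Zb y -> x <> y /\ ~ E x y) ->
  conn E (fun x => [\/ Za x, Qs x | Zb x]) wa wb ->
  exists H x, [/\ hole E H, u \in H, x \in H & Qs x].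
Proof.
move=> Es Ei Za0 Zb0 Ea Eb HZa HZb HQ Hab C.
have [m [p [Hm Pp P0 Pl PP]]] := extract Es Ei C.
have Hpinj : forall k l, k < m -> l < m -> p k = p l -> k = l.
  by move=> k l Hk Hl; case: (Pp k l Hk Hl).
have [Hab1 Hab2] := Hab _ _ Za0 Zb0.
have Hm3 : 3 <= m.
  case: m Hm Pp P0 Pl PP Hpinj => [|[|[|m]]] //= _ Pp P0 Pl PP _.
    by move: Pl; rewrite P0.
  by have := proj2 (Pp 0 1 isT isT); rewrite P0 Pl; move=> H; exfalso; apply: Hab2; apply/H; left.
have Hpu : forall k, k < m -> p k <> u.
  move=> k Hk; case: (PP k Hk) => [/HZa | /HQ | /HZb] []//.
have HR' : HR E u m p.
  split => // k Hk; split.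
    case: (PP k Hk) => [/HZa | /HQ | /HZb] [_ H] Eu.
    - by left; apply: Hpinj => //; rewrite P0; apply: H.
    - by case: (H Eu).
    - by right; apply: Hpinj => //; [lia | rewrite Pl; apply: H].
  by case=> ->; rewrite ?P0 ?Pl.
have Hh := hole_of_HR Es Ei HR'.
case: (classic (exists2 k, k < m & Qs (p k))) => [[k Hk Qk] | NQ].
  exists (u :: mkseq p m), (p k); split => //; first by rewrite mem_head.
  by rewrite inE in_mkseq ?orbT.
exfalso.
have [k [Hk Pk Nk]] := @crossing (fun k => Za (p k)) m.-1 ltac:(by rewrite /= P0)
  ltac:(by rewrite /= Pl => /(Hab _ _)/(_ Zb0) []).
have Zk1 : Zb (p k.+1).
  case: (PP k.+1 ltac:(lia)) => // Q; by case: NQ; exists k.+1 => //; lia.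
apply: (proj2 (Hab _ _ Pk Zk1)); apply/(proj2 (Pp k k.+1 ltac:(lia) ltac:(lia))).
by left.
Qed.

Definition inX (T : eqType) (E : T -> T -> Prop) u y :=
  E u y \/ exists H, [/\ hole E H, u \in H & y \in H].

Lemma core (T : eqType) (E : T -> T -> Prop) u m g :
  (forall x y, E x y -> E y x) -> (forall x, ~ E x x) -> NC E u ->
  ipathf E m g -> 3 <= m -> (forall k, k < m -> g k <> u) ->
  (forall k, 0 < k -> k < m.-1 -> ~ inX E u (g k)) ->
  inX E u (g m.-1) -> inX E u (g 0) -> ~ E u (g 0) -> False.
Proof.
move=> Es Ei Nc Pg Hm Hgu HQ Xb Xa Na.
have ginj : forall k l, k < m -> l < m -> g k = g l -> k = l.
  by move=> k l Hk Hl; case: (Pg k l Hk Hl).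
have gE : forall k l, k < m -> l < m -> (E (g k) (g l) <-> (l = k.+1 \/ k = l.+1)).
  by move=> k l Hk Hl; case: (Pg k l Hk Hl).
have gstep : forall k, k.+1 < m -> E (g k) (g k.+1).
  by move=> k Hk; apply/gE; [lia | lia | left].
case: Xa => [//|[H0 [HH0 Hu0 Ha0]]].
have [m1 [h0 [HRh0 Mem0]]] := HR_of_hole HH0 Hu0.
have [P0 Hm1 Hu1 Hadj1] := HRh0.
case: (Mem0 _ Ha0) => [Hg0u | [i0 Hi0 Hgi0]]; first by case: (Hgu 0 ltac:(lia)).
have Hi00 : 0 < i0.
  case: (posnP i0) => // Hz; case: Na; rewrite Hgi0 Hadj1 //; by left.
have Hi0m : i0 < m1.-1.
  case: (ltnP i0 m1.-1) => // Hz; case: Na; rewrite Hgi0 Hadj1 //; right; lia.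
set Wp := fun x => exists l, [/\ 2 <= l, l < m & x = g l].
have [h [i [HRh Hi Him Hhi A]]] := @anchor T E u m1 h0 i0 Wp (g m.-1) Es Ei Nc HRh0 Hi00 Hi0m
  ltac:(move=> x [l [Hl1 Hl2 ->]]; apply: conn_sym => //;
        apply: chain_f => //; first lia;
        [by move=> k Hk; apply: gstep; lia |
         move=> k Hk; rewrite -Hgi0; split;
         [apply: Hgu; lia | move/ginj; lia | move/gE; lia]]).
rewrite -Hgi0 in Hhi.
have [_ _ Hu Hadj] := HRh.
have hE : forall k l, k < m1 -> l < m1 -> (E (h k) (h l) <-> (l = k.+1 \/ k = l.+1)).
  by move=> k l Hk Hl; apply: (HR_E HRh).
set Za := fun x => exists k, k <= i /\ x = h k.
set Qs := fun x => exists l, [/\ 0 < l, l < m.-1 & x = g l].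
set b := g m.-1.
have FA : forall x, Za x -> x <> b /\ ~ E x b.
  move=> x [k [Hk ->]]; case: (ltnP k i) => Hki.
    have [B1 B2] := A b k ltac:(by exists m.-1; split => //; lia) Hki.
    by split; [move=> Heq; apply: B1 | move/Es].
  have -> : k = i by lia.
  rewrite Hhi; split; first by move/ginj; lia.
  by move/gE; lia.
have HZa : forall x, Za x -> x <> u /\ (E u x -> x = h 0).
  move=> x [k [Hk ->]]; split; first by apply: Hu; lia.
  by rewrite Hadj; [case=> [-> //|]; lia | lia].
have HQs : forall x, Qs x -> x <> u /\ ~ E u x.
  move=> x [l [Hl1 Hl2 ->]]; split; first by apply: Hgu; lia.
  by move=> Eu; apply: (HQ l) => //; left.
have Za0 : Za (h 0) by exists 0.
have Eua : E u (h 0) by rewrite Hadj; [left | lia].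
have ConnG : forall V : T -> Prop, (forall x, Za x -> V x) -> forall l, l < m ->
    (forall k, 0 < k <= l -> V (g k)) -> conn E V (h 0) (g l).
  move=> V ZV l Hl QV; apply: (@conn_trans _ _ _ _ (h i)).
    by apply: (chain_h HRh); [lia | lia | move=> k Hk; apply: ZV; exists k; split => //; lia].
  rewrite Hhi; apply: chain_f; first lia.
    by move=> k Hk; apply: gstep; lia.
  move=> k Hk; case: (posnP k) => [-> | Hk0].
    by apply: ZV; exists i; split => //; rewrite Hhi.
  by apply: QV; lia.
have ConnA : forall V : T -> Prop, (forall x, Za x -> V x) ->
    (forall x, Qs x -> V x) -> V b -> conn E V (h 0) b.
  move=> V ZV QV bV; apply: ConnG => //; first lia. move=> k Hk.
  case: (ltnP k m.-1) => Hk2; first by apply: QV; exists k; split => //; lia.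
  by have -> : k = m.-1 by lia.
have Fin : forall H x, [/\ hole E H, u \in H, x \in H & Qs x] -> False.
  move=> H x [HH HuH HxH [l [Hl1 Hl2 Hx]]]; apply: (HQ l Hl1 Hl2); right; exists H.
  by rewrite -Hx.
case: (classic (E u b)) => Eub.
  have [H [x Hx]] := @close T E u Za (fun x => x = b) Qs (h 0) b Es Ei Za0 erefl Eua Eub HZa
    ltac:(move=> x ->; split => //; apply: Hgu; lia) HQs
    ltac:(move=> x y Zx ->; exact: FA Zx)
    ltac:(apply: ConnA; [by move=> x Hx; constructor 1 | by move=> x Hx; constructor 2 | by constructor 3]).
  exact: Fin Hx.
case: Xb => [//|[Hb [HHb Hub Hbb]]].
have [m2 [h2b [HRh2b Mem2]]] := HR_of_hole HHb Hub.
have [P2 Hm2 Hu2 Hadj2] := HRh2b.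
case: (Mem2 _ Hbb) => [Hbu | [j0 Hj0 Hgj0]]; first by case: (Hgu m.-1 ltac:(lia)).
have Hj00 : 0 < j0.
  case: (posnP j0) => // Hz; case: Eub; rewrite /b Hgj0 Hadj2 //; by left.
have Hj0m : j0 < m2.-1.
  case: (ltnP j0 m2.-1) => // Hz; case: Eub; rewrite /b Hgj0 Hadj2 //; right; lia.
set Wp2 := fun x => Za x \/ exists l, [/\ 0 < l, l.+2 < m & x = g l].
have Gsb : forall x, Wp2 x -> [/\ x <> u, x <> h2b j0 & ~ E (h2b j0) x].
  rewrite -Hgj0 -/b; move=> x [Zx | [l [Hl1 Hl2 ->]]].
    have [F1 F2] := FA x Zx; split => //; first by case: (HZa x Zx).
    by move/Es.
  split; first by apply: Hgu; lia.
    by move/ginj; lia.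
  by move/gE; lia.
have [h2 [j [HRh2 Hj Hjm Hh2j B]]] := @anchor T E u m2 h2b j0 Wp2 (h 0) Es Ei Nc HRh2b Hj00 Hj0m
  ltac:(move=> x [Zx | [l [Hl1 Hl2 ->]]];
     [ case: Zx => k [Hk ->]; apply: (chain_h HRh); [lia | lia | move=> k' Hk'; apply: Gsb; left; exists k'; split => //; lia]
     | apply: ConnG; [by move=> z Zz; apply: Gsb; left | lia | move=> k Hk; apply: Gsb; right; exists k; split => //; lia]]).
have [_ _ Hu2' Hadj2'] := HRh2.
have Hbj : b = h2 j by rewrite Hh2j /b Hgj0.
set Zb := fun x => exists k, k <= j /\ x = h2 k.
have Zb0 : Zb (h2 0) by exists 0.
have Eub2 : E u (h2 0) by rewrite Hadj2'; [left | lia].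
have HZb : forall x, Zb x -> x <> u /\ (E u x -> x = h2 0).
  move=> x [k [Hk ->]]; split; first by apply: Hu2'; lia.
  by rewrite Hadj2'; [case=> [-> //|]; lia | lia].
have Zab : forall x y, Za x -> Zb y -> x <> y /\ ~ E x y.
  move=> x y Zx [k [Hk ->]]; case: (ltnP k j) => Hkj.
    by apply: B => //; left.
  have -> : k = j by lia.
  rewrite -Hbj; exact: FA Zx.
have CV : conn E (fun x => [\/ Za x, Qs x | Zb x]) (h 0) (h2 0).
  apply: (@conn_trans _ _ _ _ b).
    apply: ConnA; [by move=> x Hx; constructor 1 | by move=> x Hx; constructor 2 | by constructor 3; exists j; split].
  rewrite Hbj; apply: conn_sym => //; apply: (chain_h HRh2); [lia | lia | by move=> k Hk; constructor 3; exists k; split => //; lia].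
have [H [x Hx]] := close Es Ei Za0 Zb0 Eua Eub2 HZa HZb HQs Zab CV.
exact: Fin Hx.
Qed.

Lemma lc_uE (T : eqType) (E : T -> T -> Prop) u x y :
  x <> u -> y <> u -> (locchord E u x y <-> E x y).
Proof.
move=> Hx Hy; split; last by left.
by case=> // [[_ [[Hxu _] | [Hyu _]]]].
Qed.

Lemma lc_inX (T : eqType) (E : T -> T -> Prop) u y :
  locchord E u u y -> inX E u y.
Proof.
case=> [|[Hne [[_ [H [A B C]]] | [Hyu _]]]]; first by left.
  by right; exists H.
by case: Hne.
Qed.

Lemma inX_lc (T : eqType) (E : T -> T -> Prop) u y :
  y <> u -> inX E u y -> locchord E u u y.
Proof.
move=> Hy [Eu | [H [A B C]]]; first by left.
by right; split; [move=> Heq; apply: Hy | left; split => //; exists H].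
Qed.

Theorem theorem2p3 (T : finType) (E : T -> T -> Prop) (u : T) :
  (forall x y, E x y -> E y x) -> (forall x, ~ E x x) ->
  NC E u ->
  forall s : seq T, hole (locchord E u) s -> hole E s.
Proof.
move=> Es Ei Nc s Hs; have [Us Ss As] := Hs.
have Claim : u \in s -> forall y, y \in s -> y <> u -> locchord E u u y -> E u y.
  move=> Hus y Hy Hyu Lc; case: (classic (E u y)) => // Nuy; exfalso.
  have [m [g0 [HRg Mem]]] := HR_of_hole Hs Hus.
  have [_ Hm Hgu Hadj] := HRg.
  have [m' [g [HR' Hg0]]] : exists m' g, HR (locchord E u) u m' g /\ g 0 = y.
    case: (Mem y Hy) => [// | [k Hk Hyk]].
    have := Lc; rewrite Hyk Hadj // => -[Hk0 | Hkm].
      by exists m, g0; split => //; rewrite Hk0.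
    exists m, (fun k => g0 (m.-1 - k)); split; first exact: HR_rev.
    by rewrite Hkm; congr g0; lia.
  clear m g0 HRg Mem Hm Hgu Hadj.
  have [P Hm Hgu Hadj] := HR'.
  apply: (@core _ E u m' g Es Ei Nc) => //.
  - move=> k l Hk Hl; have [A B] := P k l Hk Hl; split => //.
    by rewrite -B lc_uE //; apply: Hgu.
  - move=> k Hk0 Hkm /(inX_lc (Hgu k ltac:(lia))); rewrite Hadj; lia.
  - by apply: lc_inX; rewrite Hadj; [right | lia].
  - by apply: lc_inX; rewrite Hadj; [left | lia].
  - by rewrite Hg0.
split => // x y Hx Hy; rewrite -As //; split; first by left.
move=> Lc; have Lc' := Lc; case: Lc' => [// | [Hne [[Hxu _] | [Hyu _]]]].
  subst x; have Hyu : y <> u by move=> Heq; apply: Hne.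
  exact: (Claim Hx y Hy Hyu Lc).
subst y; apply: (Es u x); apply: (Claim Hy x Hx Hne).
case: Lc => [/Es | [Hne' [[A B] | [A B]]]]; first by left.
  by right; split => //; right.
by right; split; [move=> Heq; apply: Hne' | left].
Qed.
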